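(* Every generic quadrangle $P$ in $\mathbb{R}^3$ is regular. Moreover, for every support system $u_1,u_2,u_3,u_4$ of $P$, the derived quadrangle $P'=B_1B_2B_3B_4$ is a plane quadrangle (its four vertices are coplanar) with oriented area $0$; in particular it is self-intersecting.
   Context: For a closed polygon $P=A_1\ldots A_n$ in $\mathbb{R}^3$ put $v_1=\overline{A_1A_2},\ldots,v_n=\overline{A_nA_1}$, indices cyclic mod $n$. $P$ is generic if any two consecutive $v_i,v_{i+1}$ are not collinear and any three consecutive $v_i,v_{i+1},v_{i+2}$ are not coplanar. A support system of $P$ is a tuple $u_1,\ldots,u_n$ with $[u_i,u_{i+1}]=v_{i+1}$ for all $i$ (cyclically; $[\cdot,\cdot]$ is the cross product). A generic polygon is regular if it has a support system. Given a support system, fix an origin $O$ and let $B_i$ be the point with $\overline{OB_i}=u_i$; the polygon $P'=B_1\ldots B_n$ (edge vectors $u_2-u_1,\ldots,u_1-u_n$) is called the derived polygon (a derivative) of $P$. A closed polygon $B_1\ldots B_n$ has oriented area $0$ if $\sum_{i=1}^n[\overline{OB_i},\overline{OB_{i+1}}]=0$ (a quantity independent of $O$); for a plane polygon this means its signed area in its plane is zero. *)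

(* Defs.v *)
From HB Require Import structures.
From mathcomp Require Import all_boot all_order all_algebra.
Set Implicit Arguments. Unset Strict Implicit. Unset Printing Implicit Defensive.
Import Order.TTheory GRing.Theory Num.Theory.
Local Open Scope ring_scope.

(* Vectors/points of R^3 are row vectors 'rV[R]_3 (origin O = 0). *)
Section Defs.
Variable R : realFieldType.
Notation vec := 'rV[R]_3.

Definition coord (x : vec) (k : nat) : R := x ord0 (inord k).

Definition cross (x y : vec) : vec :=
  \row_(k < 3)
    (if val k == 0%N then coord x 1 * coord y 2 - coord x 2 * coord y 1
     else if val k == 1%N then coord x 2 * coord y 0 - coord x 0 * coord y 2
     else coord x 0 * coord y 1 - coord x 1 * coord y 0).

Definition dot (x y : vec) : R := \sum_(k < 3) x ord0 k * y ord0 k.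

Definition collinear (x y : vec) : Prop :=
  exists a b : R, (a != 0 \/ b != 0) /\ a *: x + b *: y = 0.

Definition coplanar (x y z : vec) : Prop :=
  exists a b c : R, (a != 0 \/ b != 0 \/ c != 0) /\ a *: x + b *: y + c *: z = 0.

Variable n : nat.

Definition edge (A : 'I_n -> vec) (i : 'I_n) : vec := A (ordS i) - A i.

Definition generic (A : 'I_n -> vec) : Prop :=
  (forall i : 'I_n, ~ collinear (edge A i) (edge A (ordS i))) /\
  (forall i : 'I_n, ~ coplanar (edge A i) (edge A (ordS i)) (edge A (ordS (ordS i)))).

Definition support_system (A : 'I_n -> vec) (u : 'I_n -> vec) : Prop :=
  forall i : 'I_n, cross (u i) (u (ordS i)) = edge A (ordS i).

Definition regular (A : 'I_n -> vec) : Prop :=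
  generic A /\ exists u, support_system A u.

(* oriented area zero of the closed polygon B_1 ... B_n, O = origin *)
Definition oriented_area_zero (B : 'I_n -> vec) : Prop :=
  \sum_(i < n) cross (B i) (B (ordS i)) = 0.

Definition coplanar_points (B : 'I_n -> vec) : Prop :=
  exists (N : vec) (d : R), N != 0 /\ forall i, dot N (B i) = d.

End Defs.

Definition segments_meet (R : realFieldType) (P Q X Y : 'rV[R]_3) : Prop :=
  exists s t : R, [/\ 0 <= s <= 1, 0 <= t <= 1 &
    (1 - s) *: P + s *: Q = (1 - t) *: X + t *: Y].

Definition self_intersecting4 (R : realFieldType) (B : 'I_4 -> 'rV[R]_3) : Prop :=
  segments_meet (B (inord 0)) (B (inord 1)) (B (inord 2)) (B (inord 3)) \/
  segments_meet (B (inord 1)) (B (inord 2)) (B (inord 3)) (B (inord 0)).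

(* Main.v *)
Require Import Defs.
From HB Require Import structures.
From mathcomp Require Import all_boot all_order all_algebra.
From mathcomp Require Import ring lra.
Import Order.TTheory GRing.Theory Num.Theory.
Local Open Scope ring_scope.
Set Implicit Arguments. Unset Strict Implicit. Unset Printing Implicit Defensive.
Notation crd := Defs.coord.
Notation vec R := 'rV[R]_3.

Lemma vec_ext (R : realFieldType) (x y : vec R) :
  crd x 0 = crd y 0 -> crd x 1 = crd y 1 -> crd x 2 = crd y 2 -> x = y.
Proof.
move=> h0 h1 h2; apply/rowP => j.
have e : forall k (H : (k < 3)%N), Ordinal H = inord k.
  by move=> k H; apply: val_inj; rewrite /= inordK.
case: j => [[|[|[|k]]] Hk] //; rewrite e; [exact h0|exact h1|exact h2].
Qed.

Lemma crdD (R : realFieldType) (x y : vec R) k : crd (x + y) k = crd x k + crd y k.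
Proof. by rewrite /Defs.coord mxE. Qed.
Lemma crdN (R : realFieldType) (x : vec R) k : crd (- x) k = - crd x k.
Proof. by rewrite /Defs.coord mxE. Qed.
Lemma crdZ (R : realFieldType) (a : R) (x : vec R) k : crd (a *: x) k = a * crd x k.
Proof. by rewrite /Defs.coord mxE. Qed.
Lemma crd0 (R : realFieldType) k : crd (0 : vec R) k = 0.
Proof. by rewrite /Defs.coord mxE. Qed.
Lemma crdX0 (R : realFieldType) (x y : vec R) :
  crd (cross x y) 0 = crd x 1 * crd y 2 - crd x 2 * crd y 1.
Proof. by rewrite {1}/Defs.coord /cross mxE /= inordK. Qed.
Lemma crdX1 (R : realFieldType) (x y : vec R) :
  crd (cross x y) 1 = crd x 2 * crd y 0 - crd x 0 * crd y 2.
Proof. by rewrite {1}/Defs.coord /cross mxE /= inordK. Qed.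
Lemma crdX2 (R : realFieldType) (x y : vec R) :
  crd (cross x y) 2 = crd x 0 * crd y 1 - crd x 1 * crd y 0.
Proof. by rewrite {1}/Defs.coord /cross mxE /= inordK. Qed.
Lemma dotE (R : realFieldType) (x y : vec R) :
  dot x y = crd x 0 * crd y 0 + crd x 1 * crd y 1 + crd x 2 * crd y 2.
Proof.
rewrite /dot !big_ord_recr big_ord0 /= add0r /Defs.coord.
have e : forall k (H : (k < 3)%N), Ordinal H = inord k.
  by move=> k H; apply: val_inj; rewrite /= inordK.
rewrite -!e; by congr (_ * _ + _ * _ + _ * _); congr (_ ord0 _); apply: val_inj.
Qed.

Ltac vsimp := do 5 rewrite ?dotE ?crdD ?crdN ?crdZ ?crd0 ?crdX0 ?crdX1 ?crdX2 ?dotE.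
Ltac vext := apply: vec_ext; vsimp; ring.

Notation DD a b c := (dot a (cross b c)).

Lemma crossZl (R : realFieldType) (p : R) (x y : vec R) :
  cross (p *: x) y = p *: cross x y.
Proof. vext. Qed.
Lemma crossZr (R : realFieldType) (p : R) (x y : vec R) :
  cross x (p *: y) = p *: cross x y.
Proof. vext. Qed.
Lemma crossZZ (R : realFieldType) (p q : R) (x y : vec R) :
  cross (p *: x) (q *: y) = (p * q) *: cross x y.
Proof. vext. Qed.
Lemma cross0l (R : realFieldType) (y : vec R) : cross 0 y = 0.
Proof. vext. Qed.
Lemma dotZ (R : realFieldType) (p : R) (x y : vec R) : dot (p *: x) y = p * dot x y.
Proof. vsimp; ring. Qed.
Lemma dot3 (R : realFieldType) (p q r : R) (x y z t : vec R) :
  dot (p *: x + q *: y + r *: z) t = p * dot t x + q * dot t y + r * dot t z.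
Proof. vsimp; ring. Qed.
Lemma dotNs (R : realFieldType) (x y z t : vec R) :
  dot t (- (x + y + z)) = - (dot t x + dot t y + dot t z).
Proof. vsimp; ring. Qed.
Lemma dot_crossl (R : realFieldType) (x y : vec R) : dot x (cross x y) = 0.
Proof. vsimp; ring. Qed.
Lemma dot_crossr (R : realFieldType) (x y : vec R) : dot y (cross x y) = 0.
Proof. vsimp; ring. Qed.
Lemma dual (R : realFieldType) (a b c z : vec R) :
  DD a b c *: z = dot z a *: cross b c + dot z b *: cross c a + dot z c *: cross a b.
Proof. vext. Qed.
Lemma I20 (R : realFieldType) (a b c : vec R) :
  cross (cross a b) (cross b c) = DD a b c *: b.
Proof. vext. Qed.
Lemma I01 (R : realFieldType) (a b c : vec R) :
  cross (cross b c) (cross c a) = DD a b c *: c.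
Proof. vext. Qed.
Lemma I12 (R : realFieldType) (a b c : vec R) :
  cross (cross c a) (cross a b) = DD a b c *: a.
Proof. vext. Qed.
Lemma I0d (R : realFieldType) (a b c : vec R) :
  cross (cross b c) (cross b c - cross c a) = (- DD a b c) *: c.
Proof. vext. Qed.
Lemma Id2 (R : realFieldType) (a b c : vec R) :
  cross (cross c a - cross a b) (cross a b) = DD a b c *: a.
Proof. vext. Qed.
Lemma Idd (R : realFieldType) (a b c : vec R) :
  cross (cross b c - cross c a) (cross c a - cross a b) = DD a b c *: (a + b + c).
Proof. vext. Qed.
Lemma Db (R : realFieldType) (a b c : vec R) : dot b (cross c a) = DD a b c.
Proof. vsimp; ring. Qed.
Lemma Dc (R : realFieldType) (a b c : vec R) : dot c (cross a b) = DD a b c.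
Proof. vsimp; ring. Qed.

Lemma dot_self0 (R : realFieldType) (x : vec R) : x != 0 -> dot x x != 0.
Proof.
move=> hx; apply/eqP => h; move/eqP: hx; apply.
move: h; rewrite dotE => h.
have s0 : crd x 0 * crd x 0 = 0 by nra.
have s1 : crd x 1 * crd x 1 = 0 by nra.
have s2 : crd x 2 * crd x 2 = 0 by nra.
apply: vec_ext; rewrite crd0.
- by move/eqP: s0; rewrite mulf_eq0 orbb => /eqP.
- by move/eqP: s1; rewrite mulf_eq0 orbb => /eqP.
- by move/eqP: s2; rewrite mulf_eq0 orbb => /eqP.
Qed.

Lemma det_neq0 (R : realFieldType) (a b c : vec R) :
  ~ coplanar a b c -> DD a b c != 0.
Proof.
move=> hnc; apply/eqP => hD; apply: hnc.
have [hK|hK] := eqVneq (cross b c) 0.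
  have [hb|hb] := eqVneq b 0.
    exists 0, 1, 0; split; first by right; left; exact: oner_neq0.
    by rewrite hb !scale0r scaler0 !addr0.
  exists 0, (- dot b c), (dot b b); split; first by right; right; exact: dot_self0.
  have e : 0 *: a + (- dot b c) *: b + (dot b b) *: c = cross (cross b c) b by vext.
  by rewrite e hK cross0l.
exists (dot (cross b c) (cross b c)), (- dot (cross a c) (cross b c)),
  (- dot (cross b a) (cross b c)); split; first by left; exact: dot_self0.
have e : dot (cross b c) (cross b c) *: a + (- dot (cross a c) (cross b c)) *: b
  + (- dot (cross b a) (cross b c)) *: c = DD a b c *: cross b c by vext.
by rewrite e hD scale0r.
Qed.

Lemma solveZ (R : realFieldType) (D c : R) (p P : vec R) :
  D != 0 -> D *: p = c *: P -> p = (c / D) *: P.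
Proof.
move=> hD h; have -> : p = D^-1 *: (D *: p) by rewrite scalerA mulVf // scale1r.
by rewrite h scalerA mulrC.
Qed.

Lemma cancelD (R : realFieldType) (D c : R) :
  D != 0 -> c * (D * D) = (D * D) * D -> c = D.
Proof.
move=> hD h; apply: (mulIf (mulf_neq0 hD hD)); rewrite /= h; ring.
Qed.

Lemma meet (R : realFieldType) (a b : R) (P Q S : vec R) :
  a != 0 -> b != 0 ->
  let u0 := (a / (a * b)) *: S in
  let u1 := (b / (a * b)) *: P in
  let u2 := (- a / (a * b)) *: (P - Q) in
  let u3 := (b / (a * b)) *: (Q - S) in
  segments_meet u0 u1 u2 u3 \/ segments_meet u1 u2 u3 u0.
Proof.
move=> ha hb u0 u1 u2 u3.
have hab : a * b != 0 by rewrite mulf_neq0.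
have := hab; rewrite neq_lt => /orP [hn|hp].
  left; exists ((a*a)/(a*a - a*b)), ((a*a)/(a*a - a*b)).
  have hd : 0 < a*a - a*b by nra.
  have hd0 : a*a - a*b != 0 by rewrite gt_eqF.
  split.
  - apply/andP; split; first by apply: divr_ge0; nra; lra.
    by rewrite ler_pdivrMr // mul1r; lra.
  - apply/andP; split; first by apply: divr_ge0; nra; lra.
    by rewrite ler_pdivrMr // mul1r; lra.
  - rewrite /u0 /u1 /u2 /u3; apply: vec_ext; vsimp; field; by rewrite ha hb hd0.
right; exists ((b*b)/(b*b + a*b)), ((b*b)/(b*b + a*b)).
have hd : 0 < b*b + a*b by nra.
have hd0 : b*b + a*b != 0 by rewrite gt_eqF.
split.
- apply/andP; split; first by apply: divr_ge0; nra; lra.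
  by rewrite ler_pdivrMr // mul1r; lra.
- apply/andP; split; first by apply: divr_ge0; nra; lra.
  by rewrite ler_pdivrMr // mul1r; lra.
- rewrite /u0 /u1 /u2 /u3; apply: vec_ext; vsimp; field; by rewrite ha hb hd0.
Qed.

Lemma core (R : realFieldType) (w0 w1 w2 u0 u1 u2 u3 : vec R) :
  ~ coplanar w0 w1 w2 ->
  cross u0 u1 = w1 -> cross u1 u2 = w2 -> cross u2 u3 = - (w0 + w1 + w2) ->
  cross u3 u0 = w0 ->
  (exists N d, N != 0 /\ [/\ dot N u0 = d, dot N u1 = d, dot N u2 = d & dot N u3 = d])
  /\ (segments_meet u0 u1 u2 u3 \/ segments_meet u1 u2 u3 u0).
Proof.
move=> hnc H01 H12 H23 H30.
have hD := det_neq0 hnc.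
have o00 : dot u0 w0 = 0 by rewrite -H30 dot_crossr.
have o01 : dot u0 w1 = 0 by rewrite -H01 dot_crossl.
have o11 : dot u1 w1 = 0 by rewrite -H01 dot_crossr.
have o12 : dot u1 w2 = 0 by rewrite -H12 dot_crossl.
have o22 : dot u2 w2 = 0 by rewrite -H12 dot_crossr.
have o23 : dot u2 (- (w0 + w1 + w2)) = 0 by rewrite -H23 dot_crossl.
have o33 : dot u3 (- (w0 + w1 + w2)) = 0 by rewrite -H23 dot_crossr.
have o30 : dot u3 w0 = 0 by rewrite -H30 dot_crossl.
have [a ha] : exists a, dot u0 w2 = a by eexists.
have [b hb] : exists b, dot u1 w0 = b by eexists.
have [x hx] : exists x, dot u2 w0 = x by eexists.
have [y hy] : exists y, dot u3 w1 = y by eexists.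
have h21 : dot u2 w1 = - x.
  by move: o23; rewrite dotNs hx o22 addr0 => /eqP; rewrite oppr_eq0 addr_eq0 => /eqP ->; rewrite opprK.
have h32 : dot u3 w2 = - y.
  by move: o33; rewrite dotNs hy o30 add0r => /eqP; rewrite oppr_eq0 addr_eq0 => /eqP ->; rewrite opprK.
have r0 : DD w0 w1 w2 *: u0 = a *: cross w0 w1.
  by rewrite dual o00 o01 ha !scale0r !add0r.
have r1 : DD w0 w1 w2 *: u1 = b *: cross w1 w2.
  by rewrite dual o11 o12 hb !scale0r !addr0.
have r2 : DD w0 w1 w2 *: u2 = x *: (cross w1 w2 - cross w2 w0).
  by rewrite dual hx h21 o22 scale0r addr0 scalerBr scaleNr.
have r3 : DD w0 w1 w2 *: u3 = y *: (cross w2 w0 - cross w0 w1).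
  by rewrite dual o30 hy h32 scale0r add0r scalerBr scaleNr.
have hab : a * b = DD w0 w1 w2.
  have e : (a * b) *: (DD w0 w1 w2 *: w1) = (DD w0 w1 w2 * DD w0 w1 w2) *: w1.
    by rewrite -I20 -crossZZ -r0 -r1 crossZZ H01.
  move/(congr1 (fun z => dot z (cross w2 w0))): e; move=> e; rewrite !dotZ (Db w0 w1 w2) in e.
  by apply: cancelD hD _; rewrite -e.
have hbx : b * x = - DD w0 w1 w2.
  have e : (b * x) *: ((- DD w0 w1 w2) *: w2) = (DD w0 w1 w2 * DD w0 w1 w2) *: w2.
    by rewrite -I0d -crossZZ -r1 -r2 crossZZ H12.
  move/(congr1 (fun z => dot z (cross w0 w1))): e; move=> e; rewrite !dotZ (Dc w0 w1 w2) in e.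
  apply/eqP; rewrite -eqr_oppLR; apply/eqP.
  by apply: cancelD hD _; rewrite -e; ring.
have hya : y * a = DD w0 w1 w2.
  have e : (y * a) *: (DD w0 w1 w2 *: w0) = (DD w0 w1 w2 * DD w0 w1 w2) *: w0.
    by rewrite -Id2 -crossZZ -r3 -r0 crossZZ H30.
  move/(congr1 (fun z => dot z (cross w1 w2))): e; move=> e; rewrite !dotZ in e.
  by apply: cancelD hD _; rewrite -e.
have ha0 : a != 0 by apply: contraNneq hD => a0; rewrite -hab a0 mul0r.
have hb0 : b != 0 by apply: contraNneq hD => b0; rewrite -hab b0 mulr0.
have ex : x = - a.
  apply: (mulfI hb0); rewrite hbx -hab; ring.
have ey : y = b.
  apply: (mulIf ha0); rewrite /= hya -hab; ring.
split.
  exists (a *: w0 + (a + b) *: w1 + b *: w2), (DD w0 w1 w2); split.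
    apply/eqP => hN; apply: hnc; exists a, (a + b), b; split; first by left.
    exact: hN.
  rewrite !dot3 o00 o01 ha o11 o12 hb hx h21 o22 o30 hy h32 -hab ex ey.
  split; ring.
have e0 := solveZ hD r0.
have e1 := solveZ hD r1.
have e2 := solveZ hD r2.
have e3 := solveZ hD r3.
rewrite -hab ex ey in e0 e1 e2 e3.
rewrite e0 e1 e2 e3.
exact: meet.
Qed.

Lemma ordSv (k : nat) : (k < 4)%N -> ordS (inord k : 'I_4) = inord (k.+1 %% 4).
Proof. by move=> hk; apply: val_inj; rewrite /= !inordK // ltn_mod. Qed.

Lemma ord4 (P : 'I_4 -> Prop) :
  P (inord 0) -> P (inord 1) -> P (inord 2) -> P (inord 3) -> forall i, P i.
Proof.
move=> p0 p1 p2 p3 i.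
have e : forall k (H : (k < 4)%N), Ordinal H = inord k.
  by move=> k H; apply: val_inj; rewrite /= inordK.
by case: i => [[|[|[|[|k]]]] Hk] //; rewrite e.
Qed.

Lemma exist_sup (R : realFieldType) (a b c : vec R) :
  DD a b c != 0 ->
  [/\ cross ((DD a b c)^-1 *: cross a b) (cross b c) = b,
      cross (cross b c) ((- (DD a b c)^-1) *: (cross b c - cross c a)) = c,
      cross ((- (DD a b c)^-1) *: (cross b c - cross c a)) (cross c a - cross a b)
        = - (a + b + c)
    & cross (cross c a - cross a b) ((DD a b c)^-1 *: cross a b) = a].
Proof.
move=> hD; split.
- by rewrite crossZl I20 scalerA mulVf // scale1r.
- by rewrite crossZr I0d scalerA mulrNN mulVf // scale1r.
- by rewrite crossZl Idd scalerA mulNr mulVf // scaleN1r.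
- by rewrite crossZr Id2 scalerA mulVf // scale1r.
Qed.

Theorem theorem3p1 (R : realFieldType) (A : 'I_4 -> 'rV[R]_3) :
  generic A ->
  regular A /\
  (forall u : 'I_4 -> 'rV[R]_3, support_system A u ->
     [/\ coplanar_points u, oriented_area_zero u & self_intersecting4 u]).
Proof.
move=> hgen.
have o0 : ordS (inord 0 : 'I_4) = inord 1 by rewrite ordSv.
have o1 : ordS (inord 1 : 'I_4) = inord 2 by rewrite ordSv.
have o2 : ordS (inord 2 : 'I_4) = inord 3 by rewrite ordSv.
have o3 : ordS (inord 3 : 'I_4) = inord 0 by rewrite ordSv.
have hcop := hgen.2 (inord 0); rewrite o0 o1 in hcop.
have hw3 : edge A (inord 3) =
  - (edge A (inord 0) + edge A (inord 1) + edge A (inord 2)).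
  by rewrite /edge o0 o1 o2 o3; vext.
have hD := det_neq0 hcop.
split.
  split; first exact: hgen.
  set a := edge A (inord 0); set b := edge A (inord 1); set c := edge A (inord 2).
  have [s1 s2 s3 s4] := exist_sup hD.
  exists (fun i : 'I_4 => if val i == 0%N then (DD a b c)^-1 *: cross a b
    else if val i == 1%N then cross b c
    else if val i == 2%N then (- (DD a b c)^-1) *: (cross b c - cross c a)
    else cross c a - cross a b).
  apply: ord4; rewrite ?o0 ?o1 ?o2 ?o3 /= !inordK //=.
  by rewrite hw3.
move=> u hsup.
have H01 := hsup (inord 0); have H12 := hsup (inord 1).
have H23 := hsup (inord 2); have H30 := hsup (inord 3).
rewrite ?o0 ?o1 ?o2 ?o3 in H01 H12 H23 H30.
rewrite hw3 in H23.
have [[N [d [hN [h0 h1 h2 h3]]]] hm] := core hcop H01 H12 H23 H30.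
split => //.
  exists N, d; split => //; exact: ord4.
rewrite /oriented_area_zero (eq_bigr _ (fun i _ => hsup i)).
have -> : \sum_(i < 4) edge A (ordS i) = \sum_(i < 4) edge A i.
  by rewrite [RHS](reindex_inj (@ordS_inj 4)).
rewrite /edge sumrB.
have -> : \sum_(i < 4) A (ordS i) = \sum_(i < 4) A i.
  by rewrite [RHS](reindex_inj (@ordS_inj 4)).
by rewrite subrr.
Qed.
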